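(* Let $R$ be a left localizable ring with $\max\mathrm{Den}_l(R)=\{S_1,\ldots,S_n\}$ (distinct), where $n\geq 2$, and let $\mathfrak{a}_i:=\mathrm{ass}(S_i)$. Then for all $i=1,\ldots,n$, $$S_i\cap\bigcap_{j\neq i}\mathfrak{a}_j=\Big(\bigcap_{j\neq i}\mathfrak{a}_j\Big)\setminus\{0\}\neq\emptyset.$$
   Context: All rings are associative with $1$. A multiplicative subset $S$ of $R$ ($1\in S$, $0\notin S$, closed under multiplication) is a left Ore set if $Sr\cap Rs\neq\emptyset$ for all $r\in R$, $s\in S$; for it, $\mathrm{ass}(S):=\{r\in R: sr=0\text{ for some } s\in S\}$. A left Ore set $S$ is a left denominator set if $rs=0$ ($r\in R$, $s\in S$) implies $tr=0$ for some $t\in S$. $\max\mathrm{Den}_l(R)$ is the set of maximal elements, under inclusion, of the set of left denominator sets of $R$. A ring $R$ is left localizable if every nonzero $r\in R$ lies in some left denominator set. *)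

(* Defs.v *)
From mathcomp Require Import all_boot all_algebra.
Set Implicit Arguments. Unset Strict Implicit. Unset Printing Implicit Defensive.
Import GRing.Theory.
Local Open Scope ring_scope.

Section Den.
Variable R : pzRingType.

Definition mult_subset (S : R -> Prop) : Prop :=
  S 1 /\ ~ S 0 /\ (forall a b, S a -> S b -> S (a * b)).

Definition left_Ore (S : R -> Prop) : Prop :=
  mult_subset S /\
  forall r s, S s -> exists s', exists r', S s' /\ s' * r = r' * s.

Definition ass (S : R -> Prop) (r : R) : Prop :=
  exists s, S s /\ s * r = 0.

Definition left_den (S : R -> Prop) : Prop :=
  left_Ore S /\
  forall r s, S s -> r * s = 0 -> exists t, S t /\ t * r = 0.

Definition max_left_den (S : R -> Prop) : Prop :=
  left_den S /\
  forall T, left_den T -> (forall x, S x -> T x) -> forall x, T x -> S x.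

Definition left_localizable : Prop :=
  forall r : R, r <> 0 -> exists S, left_den S /\ S r.

End Den.

(* Main.v *)
Require Import Defs.
From mathcomp Require Import all_boot all_algebra.
From mathcomp Require Import boolp classical_sets.
Local Open Scope ring_scope.
Import GRing.Theory.
Set Implicit Arguments.
Unset Strict Implicit.

Section Aux.
Variable R : pzRingType.

Lemma den_ass_disj (D : R -> Prop) x : left_den D -> D x -> ~ ass D x.
Proof.
move=> [[[D1 [D0 DM]] _] _] Dx [s [Ds sx]].
by apply: D0; rewrite -sx; apply: DM.
Qed.

Lemma ass_mulr (D : R -> Prop) x y : ass D x -> ass D (x * y).
Proof. by move=> [s [Ds sx]]; exists s; split=> //; rewrite mulrA sx mul0r. Qed.

Lemma ass_mull (D : R -> Prop) x y : left_den D -> ass D x -> ass D (y * x).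
Proof.
move=> [[_ Ore] _] [s [Ds sx]].
have [s' [r' [Ds' e]]] := Ore y s Ds.
by exists s'; split=> //; rewrite mulrA e -mulrA sx mulr0.
Qed.

Section Red.
Hypothesis red : forall x : R, x * x = 0 -> x = 0.

Lemma rev0 (a b : R) : a * b = 0 -> b * a = 0.
Proof.
move=> ab; apply: red.
by rewrite mulrA -(mulrA b) ab mulr0 mul0r.
Qed.

Lemma ifp0 (a b y : R) : a * b = 0 -> a * y * b = 0.
Proof.
move=> ab; have ba := rev0 ab; apply: red.
by rewrite -!mulrA (mulrA b) ba mul0r !mulr0.
Qed.

Lemma sym0 (a b c : R) : a * b * c = 0 -> a * c * b = 0.
Proof.
move=> abc.
have h1 : (c * a) * b = 0.
  apply: rev0; rewrite mulrA; apply: rev0; by rewrite mulrA.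
have h2 : c * (b * (a * (c * b))) = 0.
  rewrite mulrA; apply: ifp0.
  have := ifp0 c h1; by rewrite !mulrA.
apply: red.
by rewrite -!mulrA (mulrA c) (mulrA (c * b)) -(mulrA c) -!mulrA h2 mulr0.
Qed.


Lemma swap0 (a b c d : R) : a * b * c * d = 0 -> a * c * b * d = 0.
Proof.
move=> h; have h1 : d * a * b * c = 0.
  apply: rev0; rewrite !mulrA in h *; by rewrite -!mulrA !mulrA -mulrA; apply: rev0 ; rewrite -!mulrA in h *.
have h2 := sym0 h1.
apply: rev0; by rewrite !mulrA.
Qed.

Variables D E : R -> Prop.
Hypotheses (dD : left_den D) (dE : left_den E).
Hypothesis disj : forall x, D x -> ~ ass E x.

Fixpoint good (l : seq (bool * R)) : Prop :=
  match l with
  | nil => True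
  | (b, y) :: l' => (if b then D y else E y) /\ good l'
  end.

Definition prodl (l : seq (bool * R)) := foldr (fun p acc => p.2 * acc) 1 l.
Definition pS (l : seq (bool * R)) := foldr (fun p acc => if p.1 then p.2 * acc else acc) 1 l.
Definition pT (l : seq (bool * R)) := foldr (fun p acc => if p.1 then acc else p.2 * acc) 1 l.

Definition U (x : R) := exists l, good l /\ x = prodl l.

Lemma good_cat l1 l2 : good l1 -> good l2 -> good (l1 ++ l2).
Proof. by elim: l1 => [|[b y] l IH] //= [? ?] ?; split=> //; apply: IH. Qed.

Lemma prodl_cat l1 l2 : prodl (l1 ++ l2) = prodl l1 * prodl l2.
Proof. by elim: l1 => [|[b y] l IH] /=; rewrite ?mul1r // IH mulrA. Qed.

Lemma U_mul x y : U x -> U y -> U (x * y).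
Proof.
move=> [l1 [g1 ->]] [l2 [g2 ->]]; exists (l1 ++ l2).
by split; [apply: good_cat | rewrite prodl_cat].
Qed.

Lemma U_single b y : (if b then D y else E y) -> U y.
Proof. by move=> h; exists [:: (b, y)]; split=> //=; rewrite mulr1. Qed.

Lemma pS_good l : good l -> D (pS l).
Proof.
have [[[D1 [_ DM]] _] _] := dD.
by elim: l => [|[b y] l IH] //= [hy /IH h]; case: b hy => // hy; apply: DM.
Qed.

Lemma pT_good l : good l -> E (pT l).
Proof.
have [[[E1 [_ EM]] _] _] := dE.
by elim: l => [|[b y] l IH] //= [hy /IH h]; case: b hy => // hy; apply: EM.
Qed.

Lemma prod_split l z : z * prodl l = 0 -> z * pS l * pT l = 0.
Proof.
elim: l z => [|[b y] l IH] z /=; first by rewrite !mulr1.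
rewrite mulrA => /IH; case: b => /=.
  by rewrite !mulrA.
by move/swap0; rewrite !mulrA.
Qed.

Lemma U_den : left_den U.
Proof.
have [[[D1 [D0 DM]] DO] DD] := dD.
have [[[E1 [E0 EM]] EO] ED] := dE.
split; first split; first split.
- by exists nil.
- split; last exact: U_mul.
  move=> [l [g e]].
  have := @prod_split l 1; rewrite !mul1r -e => /(_ erefl) h.
  have [t [Et tp]] := ED _ _ (pT_good g) h.
  exfalso; apply: (disj (pS_good g)); exists t; split=> //.
- move=> r s [l [g ->]]; elim: l r g => [|[b y] l IH] r /=.
    by move=> _; exists 1, r; split; [exists nil | rewrite mul1r mulr1].
  move=> [hy /IH] /(_ r) [u1 [r1 [Uu1 e1]]].
  have [y' [r2 [hy' e2]]] : exists y' r2, (if b then D y' else E y') /\ y' * r1 = r2 * y.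
    by case: b hy => hy; [apply: DO | apply: EO].
  exists (y' * u1), r2; split; first by apply: U_mul => //; apply: U_single hy'.
  by rewrite -mulrA e1 mulrA e2 mulrA.
- move=> r s [l [g ->]]; elim: l r g => [|[b y] l IH] r /=.
    by move=> _; rewrite mulr1 => ->; exists 1; split; [exists nil | rewrite mulr0].
  move=> [hy /IH h] rz; rewrite mulrA in rz; have [u [Uu ue]] := h _ rz.
  rewrite mulrA in ue.
  have [y' [hy' e]] : exists y', (if b then D y' else E y') /\ y' * (u * r) = 0.
    by case: b hy => hy; [apply: DD ue | apply: ED ue].
  by exists (y' * u); split; [apply: U_mul => //; apply: U_single hy' | rewrite -mulrA].
Qed.

End Red.
End Aux.

Lemma loc_red (R : pzRingType) : left_localizable R -> forall x : R, x * x = 0 -> x = 0.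
Proof.
move=> loc x xx; apply: contrapT => x0.
have [D [[[[_ [D0 DM]] _] _] Dx]] := loc x x0.
by apply: D0; rewrite -xx; apply: DM.
Qed.

Lemma max_absorb (R : pzRingType) (red : forall x : R, x * x = 0 -> x = 0)
  (D E : R -> Prop) : left_den D -> max_left_den E ->
  (forall x, D x -> ~ ass E x) -> forall x, D x -> E x.
Proof.
move=> dD [dE mE] disj x Dx.
have dU := U_den red dD dE disj.
apply: (mE _ dU); last by apply: (@U_single _ D E true).
by move=> y Ey; apply: (@U_single _ D E false).
Qed.

Lemma den_in_max (R : pzRingType) (D : R -> Prop) : left_den D ->
  exists M, max_left_den M /\ forall x, D x -> M x.
Proof.
move=> dD.
pose T := {A : R -> Prop | left_den A /\ forall x, D x -> A x}.
pose rl := fun A B : T => `[< forall x, sval A x -> sval B x >].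
have [||C totC|M Mmax] := @ZL_preorder T (exist _ D (conj dD (fun x h => h))) rl.
- by move=> t; apply/asboolP.
- by move=> r s t /asboolP h1 /asboolP h2; apply/asboolP => x /h1 /h2.
- have [[t0 Ct0]|nC] := pselect (exists t, C t); last first.
    by exists (exist _ D (conj dD (fun x h => h))) => s Cs; exfalso; apply: nC; exists s.
  pose V x := exists t, C t /\ sval t x.
  have incl t1 t2 : C t1 -> C t2 -> exists t, C t /\ (forall x, sval t1 x -> sval t x)
                                               /\ (forall x, sval t2 x -> sval t x).
    move=> C1 C2; have [/asboolP h|/asboolP h] := totC _ _ C1 C2.
      by exists t2.
    by exists t1.
  have dV : left_den V.
    split; first split; first split.
    - by exists t0; split=> //; have [[[[H1 _] _] _] _] := proj2_sig t0.
    - split.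
        by move=> [t [_ h]]; have [[[[_ [H0 _]] _] _] _] := proj2_sig t; exact: H0.
      move=> a b [t1 [C1 h1]] [t2 [C2 h2]].
      have [t [Ct [i1 i2]]] := incl _ _ C1 C2.
      exists t; split=> //; have [[[[_ [_ AM]] _] _] _] := proj2_sig t.
      exact: AM (i1 _ h1) (i2 _ h2).
    - move=> r s [t [Ct hs]].
      have [[[_ AO] _] _] := proj2_sig t.
      have [s' [r' [As' e]]] := AO r s hs.
      by exists s', r'; split=> //; exists t.
    - move=> r s [t [Ct hs]] rs.
      have [[_ AD] _] := proj2_sig t.
      have [u [Au e]] := AD r s hs rs.
      by exists u; split=> //; exists t.
  have DV : forall x, D x -> V x.
    by move=> x Dx; exists t0; split=> //; have [_] := proj2_sig t0; apply.
  by exists (exist _ V (conj dV DV)) => s Cs; apply/asboolP => x hx; exists s.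
- exists (sval M); split; last by have [] := proj2_sig M.
  split; first by have [] := proj2_sig M.
  move=> T' dT' MT'.
  have DT' : forall x, D x -> T' x by move=> x Dx; apply: MT'; have [_] := proj2_sig M; apply.
  have := Mmax (exist _ T' (conj dT' DT')) (introT (asboolP _) MT').
  by move/asboolP.
Qed.

Theorem corollary3p6 (R : pzRingType) (n : nat) (S : 'I_n -> (R -> Prop)) :
  (2 <= n)%N ->
  left_localizable R ->
  (* maxDen_l(R) = {S_1, ..., S_n} *)
  (forall i, max_left_den (S i)) ->
  (forall T : R -> Prop, max_left_den T -> exists i, forall x, T x <-> S i x) ->
  (* the S_i are distinct *)
  (forall i j, i <> j -> ~ (forall x, S i x <-> S j x)) ->
  forall i : 'I_n,
    (forall x : R,
       (S i x /\ (forall j, j <> i -> ass (S j) x)) <->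
       ((forall j, j <> i -> ass (S j) x) /\ x <> 0)) /\
    (exists x : R, (forall j, j <> i -> ass (S j) x) /\ x <> 0).
Proof.
move=> _ loc maxS allmax dist i.
have red := loc_red loc.
have cover x : x <> 0 -> exists k, S k x.
  move=> x0; have [D [dD Dx]] := loc x x0.
  have [M [mM DM]] := den_in_max dD.
  have [k hk] := allmax M mM.
  by exists k; apply/hk/DM.
have disjk k x : S k x -> ~ ass (S k) x by apply: den_ass_disj (proj1 (maxS k)).
have S0 k : ~ S k 0 by have [[[[_ [H _]] _] _] _] := maxS k.
have SM k a b : S k a -> S k b -> S k (a * b) by have [[[[_ [_ H]] _] _] _] := maxS k; apply: H.
have S1 k : S k 1 by have [[[[H _] _] _] _] := maxS k.
split.
  move=> x; split.
    by move=> [Six H]; split=> // x0; apply: (S0 i); rewrite -x0.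
  move=> [H x0]; split=> //; have [k Sk] := cover x x0.
  case: (eqVneq k i) => [<- //|ki]; exfalso.
  by apply: (disjk k x Sk); apply: H; apply/eqP.
suff [x [Sx Hx]] : exists x, S i x /\ forall j : 'I_n, (j < n)%N -> j <> i -> ass (S j) x.
  exists x; split; first by move=> j; apply: Hx.
  by move=> x0; apply: (S0 i); rewrite -x0.
have step : forall m, (m <= n)%N -> exists x, S i x /\ forall j : 'I_n, (j < m)%N -> j <> i -> ass (S j) x.
  elim=> [|m IH] hm; first by exists 1; split.
  have [x [Sx Hx]] := IH (ltnW hm).
  case: (eqVneq m (val i)) => [mi|mi].
    exists x; split=> // j jm ji; apply: Hx => //.
    rewrite ltnS leq_eqVlt in jm; case/orP: jm => // /eqP jm.
    by exfalso; apply: ji; apply: val_inj; rewrite /= jm mi.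
  pose j0 : 'I_n := Ordinal hm.
  have j0i : j0 <> i by move=> e; move: mi; rewrite -e eqxx.
  have [y [Siy ay]] : exists y, S i y /\ ass (S j0) y.
    apply: contrapT => hn; apply: (dist i j0 (nesym j0i)) => z.
    have sub : forall z, S i z -> S j0 z.
      apply: (max_absorb red (proj1 (maxS i)) (maxS j0)) => w Sw aw.
      by apply: hn; exists w.
    split; first exact: sub.
    by apply: (proj2 (maxS i)) => //; exact: (proj1 (maxS j0)).
  exists (x * y); split; first exact: SM.
  move=> j jm ji; rewrite ltnS leq_eqVlt in jm; case/orP: jm => [/eqP jm|jm].
    have -> : j = j0 by apply: val_inj.
    exact: (ass_mull _ (proj1 (maxS j0))).
  exact: ass_mulr (Hx j jm ji).
exact: step (leqnn n).
Qed.
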